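(* Let $(\Sigma,\boldsymbol\alpha,\boldsymbol\beta)$ be a Heegaard diagram with $n$ alpha and $n$ beta curves. If $S_{\alpha,\beta}=H_1(\Sigma;\mathbb{Z})$, then $\Pi_{\alpha,\beta}=\Pi_\alpha+\Pi_\beta$.
   Context: $\Sigma$ is a closed oriented surface of genus $g$. A collection $\boldsymbol\alpha=(\alpha_1,\dots,\alpha_n)$ of pairwise disjoint simple closed curves on $\Sigma$ is good if the span $S_\alpha$ of the $[\alpha_i]$ in $H_1(\Sigma;\mathbb{Z})$ has rank $g$; a Heegaard diagram consists of two good collections $\boldsymbol\alpha,\boldsymbol\beta$ of $n$ curves each. $\Pi_\alpha$ is the free abelian group spanned by the closures of the components of $\Sigma-\bigcup\alpha_i$, viewed as 2-chains (similarly $\Pi_\beta$). $\Pi_{\alpha,\beta}$ is the group of periodic domains: integer linear combinations of closures of components of $\Sigma-\bigcup\alpha_i-\bigcup\beta_i$ whose boundary is an integer linear combination of the alpha and beta curves; $\Pi_\alpha,\Pi_\beta$ are regarded as subgroups of $\Pi_{\alpha,\beta}$. $S_{\alpha,\beta}=S_\alpha+S_\beta$. *)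

(* Defs.v *)
(* A closed, connected, oriented surface Sigma is given as an oriented
   combinatorial map (2-cell embedded graph): a finite set of darts D,
   a fixed-point-free involution e (the two halves of an edge) and a
   permutation s (rotation of darts around their tail vertex).
   Vertices = s-orbits, edges = e-orbits, faces = orbits of phi := s \o e
   (consecutive darts d, phi d along a face boundary: head d = tail (phi d)).
   Curves are simple edge-cycles in the 1-skeleton (any finite system of
   simple closed curves can be isotoped into the 1-skeleton of a suitable
   cell structure).

   Cellular chains with integer coefficients:
   - 1-chains: functions z : D -> int, with z (e d) = - z d (value on the
     oriented edge d);
   - 2-chains: functions w : D -> int constant on faces (w d = coefficient of
     the face to the left of d); boundary  (bdry2 w) d = w d - w (e d). *)
From HB Require Import structures.
From mathcomp Require Import all_boot all_order all_algebra.
Set Implicit Arguments. Unset Strict Implicit. Unset Printing Implicit Defensive.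
Import GRing.Theory Num.Theory.
Local Open Scope ring_scope.

Section HeegaardDefs.
Variables (D : finType) (e s : D -> D).

Definition phi (d : D) : D := s (e d).

(* (D, e, s) is a closed connected oriented surface of genus g:
   Euler characteristic V - E + F = 2 - 2g, with E = #|D|/2. *)
Definition is_surface (g : nat) : Prop :=
  [/\ (0 < #|D|)%N, involutive e, (forall d, e d != d), injective s
    & (forall x y, connect (fun a b => (b == s a) || (b == e a)) x y)] /\
  ((fcard s (mem (@predT D)) + fcard phi (mem (@predT D)) + 2 * g) * 2
         = #|D| + 4)%N.

Definition same_vertex (x y : D) : bool := fconnect s x y.

(* a simple closed curve: a nonempty cyclic edge path d_1 ... d_k
   (head d_i = tail d_(i+1) cyclically) visiting pairwise distinct
   vertices and using pairwise distinct edges *)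
Definition simple_closed_curve (c : seq D) : Prop :=
  [/\ c != [::],
      cycle (fun x y => same_vertex (e x) y) c,
      pairwise (fun x y => ~~ same_vertex x y) c
    & pairwise (fun x y => y != e x) c].

Definition curve_chain (c : seq D) (d : D) : int :=
  (count_mem d c)%:Z - (count_mem (e d) c)%:Z.

Definition comb n (cs : 'I_n -> seq D) (a : 'I_n -> int) (d : D) : int :=
  \sum_(i < n) a i * curve_chain (cs i) d.

Definition two_chain (w : D -> int) : Prop := forall d, w (phi d) = w d.

Definition bdry2 (w : D -> int) (d : D) : int := w d - w (e d).

Definition one_cycle (z : D -> int) : Prop :=
  (forall d, z (e d) = - z d) /\
  (forall d, \sum_(x | same_vertex d x) z x = 0).

Definition null_homologous (z : D -> int) : Prop :=
  exists w, two_chain w /\ forall d, z d = bdry2 w d.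

(* k elements of S_cs (given by coefficient vectors A j) whose classes
   in H_1(Sigma;Z) are Z-linearly independent *)
Definition indep_in_H1 n (cs : 'I_n -> seq D) k (A : 'I_k -> 'I_n -> int)
  : Prop :=
  forall c : 'I_k -> int,
    null_homologous (fun d => \sum_(j < k) c j * comb cs (A j) d) ->
    forall j, c j = 0.

Definition span_rank n (cs : 'I_n -> seq D) (r : nat) : Prop :=
  (exists A : 'I_r -> 'I_n -> int, indep_in_H1 cs A) /\
  (forall A : 'I_r.+1 -> 'I_n -> int, ~ indep_in_H1 cs A).

Definition good_collection (g n : nat) (cs : 'I_n -> seq D) : Prop :=
  [/\ forall i, simple_closed_curve (cs i),
      (forall i j, i != j -> forall x y, x \in cs i -> y \in cs j ->
          ~~ same_vertex x y)
    & span_rank cs g].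

Definition spans_H1 n (al be : 'I_n -> seq D) : Prop :=
  forall z, one_cycle z ->
    exists a b, null_homologous (fun d => z d - comb al a d - comb be b d).

Definition on_curves n (cs : 'I_n -> seq D) (d : D) : bool :=
  [exists i, (d \in cs i) || (e d \in cs i)].

Definition region_adj (C : pred D) : rel D :=
  fun x y => (y == phi x) || ((y == e x) && ~~ C x).

(* w is an integer combination of the closures of the components of
   Sigma - C (each component R, with representative root, contributes
   the 2-chain 1_R with coefficient c R) *)
Definition in_Pi (C : pred D) (w : D -> int) : Prop :=
  exists c : D -> int, forall d, w d = c (fingraph.root (region_adj C) d).

Definition periodic_domain n (al be : 'I_n -> seq D) (w : D -> int) : Prop :=
  in_Pi (fun d => on_curves al d || on_curves be d) w /\
  exists a b, forall d, bdry2 w d = comb al a d + comb be b d.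

End HeegaardDefs.

(* Main.v *)
Require Import Defs.
From HB Require Import structures.
From mathcomp Require Import all_boot all_order all_algebra.
From mathcomp Require Import zify ring lra.
From Stdlib Require Import Classical_Prop FunctionalExtensionality.
Set Implicit Arguments. Unset Strict Implicit. Unset Printing Implicit Defensive.
Import GRing.Theory Num.Theory.
Local Open Scope ring_scope.

Section Basics.
Variables (D : finType) (e s : D -> D).
Hypotheses (eK : involutive e) (efp : forall d, e d != d) (sinj : injective s).

Lemma phi_inj : injective (phi e s).
Proof. by move=> x y; rewrite /phi => /sinj /(can_inj eK). Qed.

Lemma phi_e d : phi e s (e d) = s d.
Proof. by rewrite /phi eK. Qed.

Variable C : pred D.
Hypothesis CeK : forall d, C (e d) = C d.

Local Notation radj := (region_adj e s C).

Lemma radj_rev x y : radj x y -> connect radj y x.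
Proof.
case/orP=> [/eqP->|/andP[/eqP-> nC]].
  have : fconnect (phi e s) (phi e s x) x by rewrite fconnect_sym ?fconnect1 //; exact: phi_inj.
  apply: connect_sub => a b /eqP <-; apply: connect1; by rewrite /region_adj eqxx.
apply: connect1; by rewrite /region_adj eK eqxx CeK nC orbT.
Qed.

Lemma radj_sym : connect_sym radj.
Proof.
suff H : forall x y, connect radj x y -> connect radj y x.
  by move=> x y; apply/idP/idP => /H.
move=> x y /connectP[p]; elim: p x => [|z p IH] x /=; first by move=> _ ->.
case/andP=> xz pz yeq; exact: connect_trans (IH _ pz yeq) (radj_rev xz).
Qed.

Definition rinv (w : D -> int) := forall x y, radj x y -> w x = w y.

Lemma rinv_connect w x y : rinv w -> connect radj x y -> w x = w y.
Proof.
move=> hw /connectP[p]; elim: p x => [|z p IH] x /=; first by move=> _ ->.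
by case/andP=> xz pz yeq; rewrite (hw _ _ xz) (IH _ pz yeq).
Qed.

Lemma in_Pi_rinv w : in_Pi e s C w -> rinv w.
Proof.
case=> c hc x y xy; rewrite !hc.
have /eqP-> // : fingraph.root radj x == fingraph.root radj y.
by rewrite root_connect ?connect1 //; exact: radj_sym.
Qed.

Lemma rinv_in_Pi w : rinv w -> in_Pi e s C w.
Proof. by move=> hw; exists w => d; apply: rinv_connect (connect_root _ _). Qed.

Lemma rinv_phi w : rinv w -> forall d, w (phi e s d) = w d.
Proof. by move=> hw d; symmetry; apply: hw; rewrite /region_adj eqxx. Qed.

Lemma rinv_e w : rinv w -> forall d, ~~ C d -> w (e d) = w d.
Proof. by move=> hw d nC; symmetry; apply: hw; rewrite /region_adj eqxx nC orbT. Qed.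

Lemma rinvP w : rinv w <-> (forall d, w (phi e s d) = w d) /\ (forall d, ~~ C d -> w (e d) = w d).
Proof.
split=> [hw|[h1 h2]]; first by split; [exact: rinv_phi | exact: rinv_e].
move=> x y /orP[/eqP->|/andP[/eqP-> nC]]; by rewrite ?h1 ?h2.
Qed.

End Basics.
Section Curves.
Variables (D : finType) (e s : D -> D).
Hypotheses (eK : involutive e) (efp : forall d, e d != d) (sinj : injective s).
Variables (n : nat) (cs : 'I_n -> seq D).
Hypotheses (scc : forall i, simple_closed_curve e s (cs i))
  (disj : forall i j, i != j -> forall x y, x \in cs i -> y \in cs j ->
          ~~ same_vertex s x y).

Local Notation sv := (same_vertex s).
Local Notation C := (on_curves e cs).

Lemma sv_refl x : sv x x. Proof. exact: connect0. Qed.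
Lemma sv_sym x y : sv x y = sv y x. Proof. exact: fconnect_sym. Qed.
Lemma sv_trans x y z : sv x y -> sv y z -> sv x z. Proof. exact: connect_trans. Qed.

Lemma pairwise_eq (r : rel D) c x y : pairwise r c -> x \in c -> y \in c ->
  x != y -> r x y || r y x.
Proof.
move=> /pairwiseP pw xc yc nxy.
have ix : index x c \in gtn (size c) by rewrite inE /= index_mem.
have iy : index y c \in gtn (size c) by rewrite inE /= index_mem.
have [lt|ge] := ltnP (index x c) (index y c).
  by have := pw x _ _ ix iy lt; rewrite !nth_index // => ->.
have ne : index y c != index x c.
  by apply: contra nxy => /eqP h; rewrite -(nth_index x xc) -h nth_index.
have lt : (index y c < index x c)%N by rewrite ltn_neqAle ne ge.
by have := pw x _ _ iy ix lt; rewrite !nth_index // => ->; rewrite orbT.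
Qed.

Lemma cs_uniq i : uniq (cs i).
Proof. by case: (scc i) => _ _ pw _; apply: pairwise_uniq pw => x /=; rewrite sv_refl. Qed.

Lemma in_sv i x y : x \in cs i -> y \in cs i -> sv x y -> x = y.
Proof.
case: (scc i) => _ _ pw _ xc yc h; apply/eqP/negPn/negP => nxy.
by have := pairwise_eq pw xc yc nxy; rewrite /= h sv_sym h.
Qed.

Lemma edge_notin i x : x \in cs i -> e x \notin cs i.
Proof.
case: (scc i) => _ _ _ pw xc; apply/negP => exc.
have nxy : x != e x by rewrite eq_sym efp.
by have := pairwise_eq pw xc exc nxy; rewrite /= eqxx eK eqxx.
Qed.

Lemma other_notin i j x : x \in cs i -> j != i -> x \notin cs j.
Proof.
move=> xi ji; apply/negP => xj; by have := disj ji xj xi; rewrite sv_refl.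
Qed.

Lemma next_sv i x : x \in cs i -> sv (e x) (next (cs i) x).
Proof. by case: (scc i) => _ cyc _ _ xc; exact: (next_cycle cyc xc). Qed.

Lemma other_e_notin i j x : x \in cs i -> j != i -> e x \notin cs j.
Proof.
move=> xi ji; apply/negP => exj.
have := disj ji exj (_ : next (cs i) x \in cs i); rewrite mem_next next_sv //.
by move/(_ xi).
Qed.

Lemma CeK d : C (e d) = C d.
Proof.
apply/existsP/existsP=> [[j hj]|[j hj]]; exists j; by rewrite eK orbC in hj *.
Qed.

Lemma vertex_curves i x z : x \in cs i -> C z -> sv z (next (cs i) x) ->
  z = next (cs i) x \/ z = e x.
Proof.
move=> xi /existsP[j hj] hsv; set y := next (cs i) x in hsv *.
have yi : y \in cs i by rewrite mem_next.
case/orP: hj => [zj|ezj].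
  case: (eqVneq j i) => [ji|ji].
    by left; apply: (in_sv (i:=i)) => //; rewrite -ji.
  by have := disj ji zj yi; rewrite hsv.
set u := next (cs j) (e z).
have uj : u \in cs j by rewrite mem_next.
have suy : sv u y.
  by apply: sv_trans hsv; rewrite sv_sym -[z in sv z _]eK; exact: next_sv.
case: (eqVneq j i) => [ji|ji]; last by have := disj ji uj yi; rewrite suy.
subst j; right.
have uy : u = y by apply: (in_sv (i:=i)).
have : prev (cs i) u = prev (cs i) y by rewrite uy.
by rewrite !prev_next ?cs_uniq // => <-; rewrite eK.
Qed.

Section Walk.
Variable W : D -> int.
Hypothesis hW : rinv e s C W.

Lemma Wphi d : W (phi e s d) = W d. Proof. exact: rinv_phi hW d. Qed.
Lemma We d : ~~ C d -> W (e d) = W d. Proof. exact: rinv_e hW d. Qed.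
Lemma Ws d : W (s d) = W (e d). Proof. by rewrite -(phi_e s eK) Wphi. Qed.

Lemma walk t k : (forall j, (0 < j < k)%N -> ~~ C (iter j s t)) -> (0 < k)%N ->
  W (iter k s t) = W (s t).
Proof.
elim: k => [//|k IH] hj _.
case: k IH hj => [//|k] IH hj.
rewrite iterS Ws We; last by apply: hj; rewrite /= ltnS leqnn.
by apply: IH => // j /andP[j0 jk]; apply: hj; rewrite j0 ltnW.
Qed.

Lemma bdry_next i x : x \in cs i -> bdry2 e W (next (cs i) x) = bdry2 e W x.
Proof.
move=> xi; set y := next (cs i) x.
have yi : y \in cs i by rewrite mem_next.
have hsv : sv (e x) y by exact: next_sv.
have yex : y != e x.
  by apply: contraTneq (edge_notin xi) => <-; rewrite negbK.
have inter : forall t tg, (t == y) || (t == e x) -> (tg == y) || (tg == e x) ->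
    fconnect s t tg -> t != tg ->
    forall j, (0 < j < findex s t tg)%N -> ~~ C (iter j s t).
  move=> t tg ht htg ctg ntg j /andP[j0 jk]; apply/negP => Cz.
  have ord : (j < order s t)%N by apply: ltn_trans jk (findex_max ctg).
  have tsv : sv t y by case/orP: ht => /eqP->; rewrite ?sv_refl.
  have zsv : sv (iter j s t) y by apply: (sv_trans (y:=t)) tsv; rewrite sv_sym; exact: fconnect_iter.
  have fz := findex_iter ord.
  have zt : iter j s t != t.
    by apply: contraTneq j0 => h; rewrite -fz h findex0.
  have ztg : iter j s t != tg.
    by apply: contraTneq jk => h; rewrite -{1}fz h ltnn.
  case: (vertex_curves xi Cz zsv) => hz; rewrite hz in zt ztg;
    by move: ht htg ntg zt ztg => /orP[]/eqP-> /orP[]/eqP->; rewrite ?eqxx.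
have k1 : W y = W x.
  have ne1 : e x != y by rewrite eq_sym.
  have h1 := inter (e x) y (introT orP (or_intror (eqxx _))) (introT orP (or_introl (eqxx _))) hsv ne1.
  have k0 : (0 < findex s (e x) y)%N by rewrite lt0n findex_eq0.
  by have := walk h1 k0; rewrite iter_findex // => ->; exact: Wphi.
have k2 : W (e x) = W (e y).
  have c2 : sv y (e x) by rewrite sv_sym.
  have h2 := inter y (e x) (introT orP (or_introl (eqxx _))) (introT orP (or_intror (eqxx _))) c2 yex.
  have k0 : (0 < findex s y (e x))%N by rewrite lt0n findex_eq0.
  by have := walk h2 k0; rewrite iter_findex // => ->; rewrite Ws.
by rewrite /bdry2 k1 -k2.
Qed.

Lemma next_nthS (c : seq D) y0 p : uniq (y0 :: c) -> (p.+1 < size (y0 :: c))%N ->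
  next (y0 :: c) (nth y0 (y0 :: c) p) = nth y0 (y0 :: c) p.+1.
Proof.
move=> u hp; rewrite next_nth mem_nth ?(ltn_trans _ hp) // index_uniq //.
exact: ltn_trans hp.
Qed.

Lemma bdry_head i y0 c' : cs i = y0 :: c' -> forall x, x \in cs i ->
  bdry2 e W x = bdry2 e W y0.
Proof.
move=> ci.
suff H : forall p, (p < size (cs i))%N -> bdry2 e W (nth y0 (cs i) p) = bdry2 e W y0.
  by move=> x xi; rewrite -(nth_index y0 xi) H // index_mem.
elim=> [|p IH] hp; first by rewrite ci.
have hp' : (p < size (cs i))%N by apply: ltn_trans hp.
rewrite -(IH hp') -(@bdry_next i (nth y0 (cs i) p)) ?mem_nth //.
have u := cs_uniq i.
by move: hp u; rewrite ci => hp u; rewrite next_nthS.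
Qed.

End Walk.
Lemma chain_in i x : x \in cs i -> curve_chain e (cs i) x = 1.
Proof.
move=> xi; rewrite /curve_chain count_uniq_mem ?cs_uniq // xi.
by rewrite (count_memPn (edge_notin xi)).
Qed.

Lemma chain_other i j x : x \in cs i -> j != i -> curve_chain e (cs j) x = 0.
Proof.
move=> xi ji; rewrite /curve_chain (count_memPn (other_notin xi ji)).
by rewrite (count_memPn (other_e_notin xi ji)).
Qed.

Lemma chain_e (c : seq D) d : curve_chain e c (e d) = - curve_chain e c d.
Proof. by rewrite /curve_chain eK opprB. Qed.

Lemma comb_in a i x : x \in cs i -> comb e cs a x = a i.
Proof.
move=> xi; rewrite /comb (bigD1 i) //= chain_in // mulr1 big1 ?addr0 // => j ji.
by rewrite (chain_other xi ji) mulr0.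
Qed.

Lemma comb_e a d : comb e cs a (e d) = - comb e cs a d.
Proof. by rewrite /comb -sumrN; apply: eq_bigr => j _; rewrite chain_e mulrN. Qed.

Lemma comb_out a d : ~~ C d -> comb e cs a d = 0.
Proof.
move/existsPn => h; rewrite /comb big1 // => j _.
have := h j; rewrite negb_or => /andP[h1 h2].
by rewrite /curve_chain (count_memPn h1) (count_memPn h2) mulr0.
Qed.

Lemma bdry_comb W : rinv e s C W -> exists a, forall d, bdry2 e W d = comb e cs a d.
Proof.
move=> hW; exists (fun i => if cs i is y0 :: _ then bdry2 e W y0 else 0).
have bin : forall i x, x \in cs i ->
    bdry2 e W x = if cs i is y0 :: _ then bdry2 e W y0 else 0.
  move=> i x; case ci: (cs i) => [|y0 c'] // xi.
  by apply: (bdry_head hW ci); rewrite ci.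
move=> d; case: (boolP (C d)) => [/existsP[j /orP[dj|edj]]|nC].
- by rewrite (comb_in _ dj) (bin _ _ dj).
- rewrite -[d in comb _ _ _ d]eK comb_e (comb_in _ edj) -(bin _ _ edj).
  by rewrite /bdry2 eK opprB.
- by rewrite comb_out // /bdry2 (We hW nC) subrr.
Qed.

Lemma rinv_of_bdry W a : two_chain e s W ->
  (forall d, bdry2 e W d = comb e cs a d) -> rinv e s C W.
Proof.
move=> tw hb; apply/rinvP; split => // d nC.
by have := hb d; rewrite comb_out // /bdry2 => /eqP; rewrite subr_eq0 => /eqP.
Qed.

End Curves.
Section LinAlg.
Variables (D : finType) (e s : D -> D).
Hypotheses (eK : involutive e) (sinj : injective s).

Local Notation N := #|D|.
Definition rk (d : D) : 'I_N := enum_rank d.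
Definition vl (i : 'I_N) : D := enum_val i.
Lemma rkK d : vl (rk d) = d. Proof. exact: enum_rankK. Qed.
Lemma vlK i : rk (vl i) = i. Proof. exact: enum_valK. Qed.

Definition Gm m (g : 'I_m -> D) : 'M[rat]_(N, m) := \matrix_(i, j) ((vl i == g j)%:R).

Lemma GmE m (g : 'I_m -> D) (v : 'rV[rat]_N) j : (v *m Gm g) 0 j = v 0 (rk (g j)).
Proof.
rewrite !mxE (bigD1 (rk (g j))) //= mxE rkK eqxx mulr1 big1 ?addr0 // => i ne.
rewrite mxE; case: eqP => [h|]; last by rewrite mulr0.
by rewrite -h vlK eqxx in ne.
Qed.

Definition Pm (f : D -> D) : 'M[rat]_N := Gm (fun j => f (vl j)).

Lemma PmE f (v : 'rV[rat]_N) j : (v *m Pm f) 0 j = v 0 (rk (f (vl j))).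
Proof. exact: GmE. Qed.

Lemma mxBE n (A B : 'rV[rat]_n) j : (A - B) 0 j = A 0 j - B 0 j.
Proof. by rewrite !mxE. Qed.
Lemma mxDE n (A B : 'rV[rat]_n) j : (A + B) 0 j = A 0 j + B 0 j.
Proof. by rewrite !mxE. Qed.

Definition Inv f := kermx (1%:M - Pm f).

Lemma InvP (v : 'rV[rat]_N) f :
  reflect (forall d, v 0 (rk (f d)) = v 0 (rk d)) (v <= Inv f)%MS.
Proof.
apply: (iffP sub_kermxP); rewrite mulmxBr mulmx1.
  move=> h d; have := congr1 (fun m : 'rV[rat]_N => m 0 (rk d)) h.
  by rewrite mxBE PmE rkK mxE => /eqP; rewrite subr_eq0 => /eqP.
move=> h; apply/rowP => j; rewrite mxBE PmE h vlK mxE subrr //.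
Qed.

Lemma Inv_iter (v : 'rV[rat]_N) f : (v <= Inv f)%MS ->
  forall k d, v 0 (rk (iter k f d)) = v 0 (rk d).
Proof. by move/InvP=> h; elim=> [|k IH] d //=; rewrite h IH. Qed.

Lemma Inv_root (v : 'rV[rat]_N) f : (v <= Inv f)%MS ->
  forall d, v 0 (rk (froot f d)) = v 0 (rk d).
Proof. by move=> h d; rewrite -(iter_findex (connect_root _ d)) Inv_iter. Qed.

Lemma cap0 m p (A : 'M[rat]_(m, N)) (B : 'M[rat]_(N, p)) :
  (forall v : 'rV[rat]_N, (v <= A)%MS -> (v *m B = 0) -> v = 0) ->
  \rank (A :&: kermx B) = 0%N.
Proof.
move=> H; apply/eqP; rewrite mxrank_eq0; apply/eqP/row_matrixP => i; rewrite row0.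
apply: H; first exact: submx_trans (row_sub i _) (capmxSl _ _).
by apply/sub_kermxP; exact: submx_trans (row_sub i _) (capmxSr _ _).
Qed.

Lemma rank_Inv f : injective f -> (\rank (Inv f) <= #|roots (frel f)|)%N.
Proof.
move=> finj.
have csym : connect_sym (frel f) by move=> x y; exact: fconnect_sym.
pose Sel := Gm (@enum_val _ (roots (frel f))).
rewrite -(mxrank_mul_ker (Inv f) Sel) cap0 ?addn0 ?rank_leq_col //.
move=> v vI vS; apply/rowP => j; rewrite mxE -(vlK j) -(Inv_root vI).
have hr : froot f (vl j) \in roots (frel f) by exact: roots_root.
rewrite -(enum_rankK_in hr hr) -GmE vS mxE //.
Qed.

Lemma PmM f g : Pm f *m Pm g = Pm (f \o g).
Proof. by apply/row_matrixP => i; apply/rowP => j; rewrite row_mul PmE !mxE rkK. Qed.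

Lemma Pm_ee : Pm e *m Pm e = 1%:M.
Proof.
by rewrite PmM; apply/matrixP => i j; rewrite !mxE /= eK (inj_eq (can_inj vlK)).
Qed.

Definition M1 := 1%:M + Pm e.
Definition Anti := kermx M1.

Lemma M1_Inv : (M1 <= Inv e)%MS.
Proof.
apply/sub_kermxP; rewrite mulmxDl mul1mx mulmxBr mulmx1 Pm_ee.
by rewrite addrA subrK subrr.
Qed.

Lemma antiP (v : 'rV[rat]_N) : (v <= Anti)%MS -> forall d, v 0 (rk (e d)) = - v 0 (rk d).
Proof.
move/sub_kermxP; rewrite mulmxDr mulmx1 => h d.
have := congr1 (fun m : 'rV[rat]_N => m 0 (rk d)) h.
by rewrite mxDE PmE rkK mxE addrC => /eqP; rewrite addr_eq0 => /eqP.
Qed.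

Lemma sum_anti (v : 'rV[rat]_N) : (v <= Anti)%MS -> \sum_j v 0 j = 0.
Proof.
move=> va; have h : \sum_j v 0 j = - \sum_j v 0 j.
  rewrite -sumrN (reindex (fun j => rk (e (vl j)))) /=; last first.
    by exists (fun j => rk (e (vl j))) => j _; rewrite rkK eK vlK.
  by apply: eq_bigr => j _; rewrite antiP //; congr (- v 0 _); exact: vlK.
by move/eqP: h; rewrite -subr_eq0 opprK -mulr2n mulrn_eq0 /= => /eqP.
Qed.

Definition M2 : 'M[rat]_N := \matrix_(i, j) ((same_vertex s (vl j) (vl i))%:R).

Lemma M2E (v : 'rV[rat]_N) j :
  (v *m M2) 0 j = \sum_i v 0 i * (same_vertex s (vl j) (vl i))%:R.
Proof. by rewrite mxE; apply: eq_bigr => i _; rewrite mxE. Qed.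

Lemma M2_Inv : (M2 <= Inv s)%MS.
Proof.
apply/row_subP => i; apply/InvP => d; rewrite !mxE !rkK /same_vertex.
by rewrite -(same_fconnect1 sinj).
Qed.

Definition mu : 'cV[rat]_N := \col_j ((roots (frel s) (vl j))%:R).

Lemma csym_s : connect_sym (frel s).
Proof. by move=> x y; exact: fconnect_sym. Qed.

Lemma mu_anti (v : 'rV[rat]_N) : (v <= Anti)%MS -> v *m M2 *m mu = 0.
Proof.
move=> va; apply/matrixP => i0 k0; rewrite !ord1 mxE [RHS]mxE.
under eq_bigr do rewrite M2E mxE mulr_suml.
rewrite exchange_big /= -[RHS](sum_anti va); apply: eq_bigr => i _.
under eq_bigr do rewrite -mulrA.
rewrite -mulr_sumr -[RHS]mulr1; congr (_ * _).
rewrite (bigD1 (rk (froot s (vl i)))) //= rkK.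
rewrite /same_vertex fconnect_sym // connect_root (roots_root csym_s).
rewrite (_ : true%:R = 1 :> rat) // mulr1.
rewrite big1 ?addr0 // => j ne.
case: (boolP (fconnect s (vl j) (vl i))) => h; last by rewrite mul0r.
case: (boolP (roots (frel s) (vl j))) => r; last by rewrite mulr0.
have rj : froot s (vl j) = vl j by apply/eqP.
have hji : froot s (vl j) = froot s (vl i) by apply/eqP; rewrite (root_connect csym_s).
by move: ne; rewrite -hji rj vlK eqxx.
Qed.

Definition one : 'rV[rat]_N := const_mx 1.

Lemma one_Inv f : (one <= Inv f)%MS.
Proof. by apply/InvP => d; rewrite !mxE. Qed.

Lemma AntiM2_lt : (0 < N)%N -> (Anti *m M2 < Inv s)%MS.
Proof.
move=> N0; rewrite ltmxE (submx_trans (submxMl _ _) M2_Inv) /=; apply/negP => h.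
have : (one <= Anti *m M2)%MS by apply: submx_trans (one_Inv s) h.
case/submxP => X hX.
have z : Anti *m M2 *m mu = 0.
  apply/row_matrixP => i; rewrite row0 (row_mul i (Anti *m M2)) (row_mul i Anti).
  by apply: mu_anti; exact: row_sub.
have := congr1 (fun m : 'M[rat]_(1,1) => m 0 0) (congr1 (mulmx^~ mu) hX).
rewrite /= -mulmxA z mulmx0 mxE.
case/card_gt0P: N0 => d0 _.
rewrite (bigD1 (rk (froot s d0))) //= !mxE rkK (roots_root csym_s) mul1r.
rewrite (_ : true%:R = 1 :> rat) //.
have : 0 <= \sum_(j | j != rk (froot s d0)) one 0 j * mu j 0.
  by apply: sumr_ge0 => j _; rewrite !mxE mul1r ler0n.
move=> ge0 /eqP; rewrite addrC addr_eq0 => /eqP hS.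
by move: ge0; rewrite hS oppr_ge0 ler10.
Qed.

End LinAlg.
Section RankBound.
Variables (D : finType) (e s : D -> D).
Hypotheses (eK : involutive e) (efp : forall d, e d != d) (sinj : injective s).

Local Notation N := #|D|.
Local Notation rk := (@rk D).
Local Notation vl := (@vl D).

Definition Zsp := (Anti e :&: kermx (M2 s))%MS.
Definition M3 := 1%:M - Pm e.
Definition Bsp := Inv (phi e s) *m M3.
Definition Qm := cokermx Bsp.

Lemma fcardE f : fcard f (mem (@predT D)) = #|roots (frel f)|.
Proof. by apply: eq_card => x; rewrite !inE andbT. Qed.

Lemma rank_Bsp : (0 < N)%N -> (\rank Bsp < \rank (Inv (phi e s)))%N.
Proof.
case/card_gt0P => d0 _.
rewrite -(mxrank_mul_ker (Inv (phi e s)) M3) -/Bsp.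
have h1 : (one D <= Inv (phi e s) :&: kermx M3)%MS.
  rewrite sub_capmx one_Inv; apply/sub_kermxP.
  by rewrite mulmxBr mulmx1; apply/rowP => j; rewrite mxBE PmE !mxE subrr.
have nz : one D != 0.
  apply/eqP => h; have := congr1 (fun m : 'rV[rat]_N => m 0 (rk d0)) h.
  by rewrite !mxE => /eqP; rewrite oner_eq0.
have := mxrankS h1; rewrite rank_rV nz /=. lia.
Qed.

Lemma rank_ZQ : (\rank Zsp <= \rank (Zsp *m Qm) + \rank Bsp)%N.
Proof.
rewrite -{1}(mxrank_mul_ker Zsp Qm) leq_add2l mxrankS //.
by apply: submx_trans (capmxSr _ _) _; rewrite submxE mulmx_ker.
Qed.

Lemma card_roots_e : (2 * #|roots (frel e)| <= N)%N.
Proof.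
have einj : injective e := can_inj eK.
have csym : connect_sym (frel e) by move=> x y; exact: fconnect_sym.
set R := [set d | roots (frel e) d].
have hR : #|R| = #|roots (frel e)| by rewrite cardsE.
have hI : R :&: (e @: R) = set0.
  apply/setP => x; rewrite !inE; apply/negP => /andP[xr /imsetP[r rr xe]].
  rewrite inE in rr; move/eqP: xr; rewrite xe.
  have -> : froot e (e r) = froot e r.
    by apply/eqP; rewrite (root_connect csym) fconnect_sym // fconnect1.
  by move/eqP: rr => -> /eqP; rewrite eq_sym (negbTE (efp r)).
have := cardsUI R (e @: R); rewrite hI cards0 addn0 card_imset //.
have := subset_leq_card (subsetT (R :|: e @: R)); rewrite cardsT; lia.
Qed.

Lemma rank_bound g : (0 < N)%N ->
  ((fcard s (mem (@predT D)) + fcard (phi e s) (mem (@predT D)) + 2 * g) * 2 = N + 4)%N ->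
  (2 * g <= \rank (Zsp *m Qm))%N.
Proof.
move=> N0; rewrite !fcardE => hg.
have h1 := rank_Inv sinj.
have h2 := rank_Inv (phi_inj eK sinj).
have h3 := leq_trans (mxrankS (M1_Inv eK)) (rank_Inv (can_inj eK)).
have h4 := mxrank_ker (M1 e).
have h5 := rank_ltmx (AntiM2_lt eK sinj N0).
have h6 := mxrank_mul_ker (Anti e) (M2 s).
have h7 := rank_Bsp N0.
have h8 := rank_ZQ.
have h9 := card_roots_e.
have h10 := rank_leq_row (M1 e).
rewrite -/(Anti e) in h4; rewrite -/Zsp in h6.
Show. lia.
Qed.

End RankBound.
Lemma subB_sub (m1 m2 n : nat) (A B : 'M[rat]_(m1, n)) (C : 'M[rat]_(m2, n)) :
  (A <= C)%MS -> (B <= C)%MS -> (A - B <= C)%MS.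
Proof. by move=> hA hB; apply: addmx_sub hA _; rewrite -scaleN1r scalemx_sub. Qed.

Section IntLayer.
Variables (D : finType) (e s : D -> D).
Hypotheses (eK : involutive e) (sinj : injective s)
  (hconn : forall x y, connect (fun a b => (b == s a) || (b == e a)) x y).

Local Notation N := #|D|.
Local Notation rk := (@rk D).
Local Notation vl := (@vl D).

Definition vec (z : D -> int) : 'rV[rat]_N := \row_j ((z (vl j))%:~R).

Lemma vecE z d : vec z 0 (rk d) = (z d)%:~R.
Proof. by rewrite mxE rkK. Qed.

Lemma nh_sub z : null_homologous e s z -> (vec z <= Bsp e s)%MS.
Proof.
case=> w [tw hz].
have -> : vec z = vec w *m M3 e.
  apply/rowP => j; rewrite /M3 mulmxBr mulmx1 mxBE PmE !mxE rkK hz /bdry2.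
  by rewrite intrB.
by apply: submxMr; apply/InvP => d; rewrite !vecE tw.
Qed.

Lemma clear_den (u : 'rV[rat]_N) : exists k : int, k != 0 /\
  exists w : D -> int, forall d, ((w d)%:~R : rat) = k%:~R * u 0 (rk d).
Proof.
exists (\prod_j denq (u 0 j)); split.
  by apply/prodf_neq0 => j _; exact: denq_neq0.
exists (fun d => numq (u 0 (rk d)) * \prod_(j | j != rk d) denq (u 0 j)) => d.
by rewrite [in RHS](bigD1 (rk d)) //= !intrM numqE [RHS]mulrC mulrA.
Qed.

Lemma torsion k z : k != 0 -> null_homologous e s (fun d => k * z d) ->
  null_homologous e s z.
Proof.
move=> k0 [w [tw hw]].
case: (pickP (@predT D)) => [d0 _|h]; last first.
  by exists (fun _ => 0); split => // d; have := h d.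
have step : forall x y, (y == s x) || (y == e x) -> (k %| w y - w x)%Z.
  move=> x y hxy.
  have hex : (k %| w (e x) - w x)%Z.
    have -> : w (e x) - w x = - (k * z x) by rewrite hw /bdry2 opprB.
    by rewrite rpredN dvdz_mulr ?dvdzz.
  by case/orP: hxy => /eqP ->; rewrite // -(phi_e s eK) tw.
have dv : forall d, (k %| w d - w d0)%Z.
  move=> d; have /connectP[p hp ->] := hconn d0 d.
  elim/last_ind: p hp => [|p y IH] /=; first by rewrite subrr dvdz0.
  rewrite rcons_path last_rcons => /andP[hp hy].
  by rewrite -(subrK (w (last d0 p)) (w y)) -addrA rpredD // ?IH // step.
exists (fun d => ((w d - w d0) %/ k)%Z); split.
  by move=> d; rewrite tw.
move=> d; apply: (mulfI k0); rewrite hw /bdry2 mulrBr ![k * _]mulrC !divzK ?dv //.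
by rewrite opprB addrA subrK.
Qed.

Lemma sub_nh z : (vec z <= Bsp e s)%MS -> null_homologous e s z.
Proof.
case/submxP => X hX; set u := X *m Inv (phi e s).
have /InvP uI : (u <= Inv (phi e s))%MS by exact: submxMl.
have hz : forall d, (z d)%:~R = u 0 (rk d) - u 0 (rk (e d)).
  by move=> d; rewrite -vecE hX /Bsp mulmxA -/u /M3 mulmxBr mulmx1 mxBE PmE rkK.
case: (clear_den u) => k [k0 [w hw]].
apply: (torsion k0); exists w; split.
  by move=> d; apply: (@intr_inj rat); rewrite !hw uI.
by move=> d; apply: (@intr_inj rat); rewrite /bdry2 intrM intrB !hw hz mulrBr.
Qed.

Lemma Zsp_cycle (r : 'rV[rat]_N) : (r <= Zsp e s)%MS ->
  exists k : int, k != 0 /\ exists z, one_cycle e s z /\ vec z = k%:~R *: r.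
Proof.
rewrite sub_capmx => /andP[ra /sub_kermxP rm].
case: (clear_den r) => k [k0 [z hz]]; exists k; split => //; exists z; split; last first.
  by apply/rowP => j; rewrite !mxE hz vlK.
split.
  by move=> d; apply: (@intr_inj rat); rewrite intrN !hz (antiP ra) mulrN.
move=> d; apply: (@intr_inj rat).
rewrite (big_morph (fun n : int => (n%:~R : rat)) (@intrD rat) (mulr0z 1)) mulr0z.
have -> : \sum_(x | same_vertex s d x) ((z x)%:~R : rat) =
    \sum_(x | same_vertex s d x) k%:~R * r 0 (rk x).
  by apply: eq_bigr => x _; exact: hz.
rewrite -mulr_sumr.
suff -> : \sum_(x | same_vertex s d x) r 0 (rk x) = 0 by rewrite mulr0.
have h := congr1 (fun m : 'rV[rat]_N => m 0 (rk d)) rm.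
rewrite /= M2E mxE rkK in h; rewrite -[RHS]h.
rewrite (reindex vl) /=; last by exists rk => [i _|x _]; [exact: vlK | exact: rkK].
rewrite big_mkcond /=; apply: eq_bigr => i _; rewrite vlK.
by case: ifP => _; rewrite ?mulr1 ?mulr0.
Qed.

End IntLayer.
Section Main.
Variables (D : finType) (e s : D -> D).
Hypotheses (eK : involutive e) (efp : forall d, e d != d) (sinj : injective s)
  (hconn : forall x y, connect (fun a b => (b == s a) || (b == e a)) x y).
Variables (g n : nat).

Local Notation N := #|D|.
Local Notation vec := (@vec D).

Lemma vecD (z1 z2 : D -> int) : vec (fun d => z1 d + z2 d) = vec z1 + vec z2.
Proof. by apply/rowP => j; rewrite !mxE intrD. Qed.
Lemma vecB (z1 z2 : D -> int) : vec (fun d => z1 d - z2 d) = vec z1 - vec z2.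
Proof. by apply/rowP => j; rewrite !mxE intrB. Qed.
Lemma vec_sum m (c : 'I_m -> int) (F : 'I_m -> D -> int) :
  vec (fun d => \sum_(j < m) c j * F j d) = \sum_(j < m) (c j)%:~R *: vec (F j).
Proof.
apply/rowP => k; rewrite summxE mxE.
rewrite (big_morph (fun n : int => (n%:~R : rat)) (@intrD rat) (mulr0z 1)).
by apply: eq_bigr => j _; rewrite intrM !mxE.
Qed.

Definition Amat (cs : 'I_n -> seq D) (A : 'I_g -> 'I_n -> int) : 'M[rat]_(g, N) :=
  \matrix_(i < g) vec (comb e cs (A i)).

Lemma comb_dep (cs : 'I_n -> seq D) (A : 'I_g -> 'I_n -> int) :
  indep_in_H1 e s cs A ->
  (forall A' : 'I_g.+1 -> 'I_n -> int, ~ indep_in_H1 e s cs A') ->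
  forall a, exists x : 'rV[rat]_g, (vec (comb e cs a) - x *m Amat cs A <= Bsp e s)%MS.
Proof.
move=> hA hmax a.
pose F (j : 'I_g.+1) := if unlift ord0 j is Some i then A i else a.
have F0 : F ord0 = a by rewrite /F unlift_none.
have FS : forall i, F (lift ord0 i) = A i by move=> i; rewrite /F liftK.
have [c [hc [j cj]]] : exists c : 'I_g.+1 -> int,
    null_homologous e s (fun d => \sum_(j < g.+1) c j * comb e cs (F j) d) /\
    exists j, c j != 0.
  apply: NNPP => H; apply: (hmax F) => c hc j.
  apply/eqP/negPn/negP => cj; apply: H; exists c; split => //; by exists j.
have split_sum : forall d, \sum_(j < g.+1) c j * comb e cs (F j) d =
    c ord0 * comb e cs a d + \sum_(i < g) c (lift ord0 i) * comb e cs (A i) d.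
  by move=> d; rewrite big_ord_recl F0; congr (_ + _); apply: eq_bigr => i _; rewrite FS.
have c0 : c ord0 != 0.
  apply/negP => /eqP c0.
  have hl : forall i, c (lift ord0 i) = 0.
    apply: hA; move: hc; congr (null_homologous e s _); apply: functional_extensionality => d.
    by rewrite split_sum c0 mul0r add0r.
  move: cj; case: (unliftP ord0 j) => [i ->|->]; by rewrite ?hl ?c0 eqxx.
have c0' : ((c ord0)%:~R : rat) != 0 by rewrite intr_eq0.
have hv := nh_sub hc.
rewrite (_ : (fun d => _) = (fun d => c ord0 * comb e cs a d +
   \sum_(i < g) c (lift ord0 i) * comb e cs (A i) d)) in hv; last first.
  by apply: functional_extensionality => d; rewrite split_sum.
rewrite vecD vec_sum in hv.
exists (\row_i (- (c (lift ord0 i))%:~R / (c ord0)%:~R)).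
have -> : vec (comb e cs a) - \row_i (- (c (lift ord0 i))%:~R / (c ord0)%:~R) *m Amat cs A
   = ((c ord0)%:~R)^-1 *: vec (fun d => c ord0 * comb e cs a d) +
     ((c ord0)%:~R)^-1 *: \sum_(i < g) (c (lift ord0 i))%:~R *: vec (comb e cs (A i)).
  rewrite (_ : vec (fun d => c ord0 * comb e cs a d) = (c ord0)%:~R *: vec (comb e cs a)); last first.
    by apply/rowP => k; rewrite !mxE intrM.
  rewrite scalerA mulVf // scale1r; congr (_ + _).
  rewrite mulmx_sum_row -sumrN scaler_sumr; apply: eq_bigr => i _.
  by rewrite rowK mxE scalerA -scaleNr mulNr opprK mulrC.
by rewrite -scalerDr scalemx_sub.
Qed.

End Main.
Lemma zmod_id4 (V : zmodType) (va vb X Y : V) :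
  X + Y = (va + vb) - (va - X) - (vb - Y).
Proof. by rewrite !opprB (addrAC va) subrKC -addrA subrKC. Qed.

Section Final.
Variables (D : finType) (e s : D -> D) (g n : nat) (al be : 'I_n -> seq D).
Hypotheses (eK : involutive e) (efp : forall d, e d != d) (sinj : injective s)
  (hconn : forall x y, connect (fun a b => (b == s a) || (b == e a)) x y)
  (N0 : (0 < #|D|)%N)
  (hg : ((fcard s (mem (@predT D)) + fcard (phi e s) (mem (@predT D)) + 2 * g) * 2
         = #|D| + 4)%N)
  (hspan : spans_H1 e s al be).
Variables (Aal Abe : 'I_g -> 'I_n -> int).
Hypotheses (ial : indep_in_H1 e s al Aal) (ibe : indep_in_H1 e s be Abe)
  (mal : forall A' : 'I_g.+1 -> 'I_n -> int, ~ indep_in_H1 e s al A')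
  (mbe : forall A' : 'I_g.+1 -> 'I_n -> int, ~ indep_in_H1 e s be A').

Local Notation N := #|D|.
Local Notation vec := (@vec D).
Local Notation Aa := (Amat e al Aal).
Local Notation Ab := (Amat e be Abe).
Definition ABmat := col_mx Aa Ab.

Lemma inB m (M : 'M[rat]_(m, N)) : (M <= Bsp e s)%MS -> (M <= ABmat + Bsp e s)%MS.
Proof. by move=> h; apply: submx_trans h (addsmxSr _ _). Qed.

Lemma inAa (x : 'rV[rat]_g) : (x *m Aa <= ABmat + Bsp e s)%MS.
Proof.
rewrite (_ : x *m Aa = row_mx x 0 *m ABmat); last by rewrite mul_row_col mul0mx addr0.
exact: submx_trans (submxMl _ _) (addsmxSl _ _).
Qed.

Lemma inAb (x : 'rV[rat]_g) : (x *m Ab <= ABmat + Bsp e s)%MS.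
Proof.
rewrite (_ : x *m Ab = row_mx 0 x *m ABmat); last by rewrite mul_row_col mul0mx add0r.
exact: submx_trans (submxMl _ _) (addsmxSl _ _).
Qed.

Lemma cycle_span z : one_cycle e s z -> (vec z <= ABmat + Bsp e s)%MS.
Proof.
move=> hz; case: (hspan hz) => a [b hab].
case: (comb_dep ial mal a) => xa ha; case: (comb_dep ibe mbe b) => xb hb.
have h0 := nh_sub hab.
have e1 : vec (fun d => z d - comb e al a d - comb e be b d) =
    vec z - vec (comb e al a) - vec (comb e be b).
  by apply/rowP => j; rewrite !mxE !intrB.
rewrite e1 in h0.
set va := vec (comb e al a) in h0 ha *; set vb := vec (comb e be b) in h0 hb *.
have -> : vec z = vec z - va - vb + vb + va by rewrite !subrK.
apply: addmx_sub; first apply: addmx_sub; first exact: inB.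
  by rewrite -(subrK (xb *m Ab) vb); apply: addmx_sub; [exact: inB | exact: inAb].
by rewrite -(subrK (xa *m Aa) va); apply: addmx_sub; [exact: inB | exact: inAa].
Qed.

Lemma Z_sub : (Zsp e s <= ABmat + Bsp e s)%MS.
Proof.
apply/row_subP => i; case: (Zsp_cycle (row_sub i (Zsp e s))) => k [k0 [z [hz hv]]].
have k0' : (k%:~R : rat) != 0 by rewrite intr_eq0.
by rewrite -(scalerK k0' (row i (Zsp e s))) scalemx_sub // -hv cycle_span.
Qed.

Lemma sub_Q m (A : 'M[rat]_(m, N)) : (A <= ABmat + Bsp e s)%MS ->
  (A *m Qm e s <= ABmat *m Qm e s)%MS.
Proof.
rewrite addsmxE => /submxP[X ->]; rewrite -(hsubmxK X) mul_row_col mulmxDl.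
by rewrite -[rsubmx X *m Bsp e s *m _]mulmxA /Qm mulmx_coker mulmx0 addr0 -mulmxA submxMl.
Qed.

Lemma AB_free : row_free (ABmat *m Qm e s).
Proof.
have h1 := rank_bound eK efp sinj N0 hg.
have h2 := mxrankS (sub_Q Z_sub).
have h3 := rank_leq_row (ABmat *m Qm e s).
rewrite /row_free eqn_leq h3 /=; apply: leq_trans (leq_trans h1 h2).
by rewrite addnn mul2n.
Qed.

Lemma nh_split a b :
  null_homologous e s (fun d => comb e al a d + comb e be b d) ->
  null_homologous e s (comb e al a).
Proof.
move=> h; case: (comb_dep ial mal a) => xa ha; case: (comb_dep ibe mbe b) => xb hb.
have h0 := nh_sub h; rewrite vecD in h0.
have h1 : (row_mx xa xb *m ABmat <= Bsp e s)%MS.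
  rewrite mul_row_col (zmod_id4 (vec (comb e al a)) (vec (comb e be b))).
  by apply: subB_sub => //; apply: subB_sub.
move: h1; rewrite submxE -mulmxA (mulmx_free_eq0 _ AB_free) row_mx_eq0.
case/andP => /eqP xa0 _; apply: (sub_nh eK hconn).
by move: ha; rewrite xa0 mul0mx subr0.
Qed.

End Final.

Unset Implicit Arguments.

Theorem corollary3p2 (D : finType) (e s : D -> D) (g n : nat)
    (al be : 'I_n -> seq D) :
  is_surface e s g ->
  good_collection e s g al ->
  good_collection e s g be ->
  spans_H1 e s al be ->
  forall w : D -> int,
    periodic_domain e s al be w <->
    exists w1 w2 : D -> int,
      [/\ in_Pi e s (on_curves e al) w1,
          in_Pi e s (on_curves e be) w2
        & forall d, w d = w1 d + w2 d].
Proof.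
move=> [[N0 eK efp sinj hconn] hg] [sal dal [[Aal ial] mal]] [sbe dbe [[Abe ibe] mbe]] hspan w.
have CeKu : forall d, (on_curves e al (e d) || on_curves e be (e d)) =
    (on_curves e al d || on_curves e be d) by move=> d; rewrite !(CeK eK).
split.
- case=> hPi [a [b hb]].
  have tw : two_chain e s w := fun d => rinv_phi (in_Pi_rinv eK sinj CeKu hPi) d.
  have hnh : null_homologous e s (fun d => comb e al a d + comb e be b d).
    by exists w; split.
  case: (nh_split eK efp sinj hconn N0 hg hspan ial ibe mal mbe hnh) => W [tW hW].
  exists W, (fun d => w d - W d); split.
  + by apply: rinv_in_Pi; apply: (rinv_of_bdry (a := a)) => // d; rewrite hW.
  + apply: rinv_in_Pi; apply: (rinv_of_bdry (a := b)).
      by move=> d; rewrite /= tw tW.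
    by move=> d; have := hb d; have := hW d; rewrite /bdry2; lia.
  + by move=> d; rewrite addrC subrK.
- case=> w1 [w2 [p1 p2 hw]].
  have r1 := in_Pi_rinv eK sinj (CeK eK al) p1.
  have r2 := in_Pi_rinv eK sinj (CeK eK be) p2.
  split.
  + apply: rinv_in_Pi; apply/rinvP; split => d.
      by rewrite !hw (rinv_phi r1) (rinv_phi r2).
    by rewrite negb_or => /andP[n1 n2]; rewrite !hw (rinv_e r1) // (rinv_e r2).
  + case: (bdry_comb eK efp sinj sal dal r1) => a ha.
    case: (bdry_comb eK efp sinj sbe dbe r2) => b hb.
    by exists a, b => d; rewrite -ha -hb /bdry2 !hw opprD addrACA.
Qed.
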